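(* Let $F$ be a bicontinuous set functor with $F\emptyset\ne\emptyset$, with a presentation $\varepsilon\colon H_\Sigma\to F$ and chosen $p'\in\Sigma_0$. Then the terminal coalgebra $\nu F$, ordered by cutting, is a cpo which is a conservative completion of the initial algebra $\mu F$ (embedded via $m$). Moreover, ordering $F(\mu F)$ so that $\varphi$ is an order isomorphism and $F(\nu F)$ so that $\tau$ is one, $\tau$ is the unique continuous map $g\colon\nu F\to F(\nu F)$ with $g\cdot m=Fm\cdot\varphi^{-1}$.
   Context: Bicontinuous: $F$ preserves filtered colimits (finitary) and limits of $\omega^{op}$-chains. $(\mu F,\varphi)$: initial algebra; $(\nu F,\tau)$: terminal coalgebra; $m\colon\mu F\to\nu F$ the unique coalgebra homomorphism $(\mu F,\varphi^{-1})\to(\nu F,\tau)$ (injective). Presentation: finitary signature $\Sigma$, $H_\Sigma X=\coprod_n\Sigma_n\times X^n$, natural $\varepsilon\colon H_\Sigma\to F$ with surjective components. $\Sigma$-trees: ordered rooted trees labelled in $\Sigma$, a node labelled in $\Sigma_n$ having $n$ children; $\nu H_\Sigma$ = all $\Sigma$-trees with $\tau'$ inverse of tree tupling, $\mu H_\Sigma$ = finite ones. $\partial'_ns$: delete nodes of height $>n$ and relabel the nodes of height $n$ by $p'$. $h\colon\mu H_\Sigma\to\mu F$: the unique $\Sigma$-algebra homomorphism into $(\mu F,\varphi\cdot\varepsilon_{\mu F})$; $\sim$ its kernel; $s\sim^*s'$ iff $\partial'_ns\sim\partial'_ns'$ for all $n$. $\hat k\colon\nu H_\Sigma\to\nu F$: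 the unique $F$-coalgebra homomorphism $(\nu H_\Sigma,\varepsilon_{\nu H_\Sigma}\tau')\to(\nu F,\tau)$, surjective with kernel $\sim^*$. Order by cutting on $\nu F$: $x\le y$ iff $x=y$ or $x=\hat k(s)$, $y=\hat k(s')$ with $s\sim^*\partial'_ns'$ for some $n$. Continuous = monotone and preserving existing directed joins. A conservative completion of a poset $P$ is a cpo containing $P$ as a subposet closed under existing directed joins such that every continuous map from $P$ to a cpo extends uniquely to a continuous map on the completion. *)

(* Defs.v *)
From mathcomp Require Import all_boot.
Set Implicit Arguments.
Unset Strict Implicit.
Unset Printing Implicit Defensive.

Definition fmap_t (F : Type -> Type) := forall A B : Type, (A -> B) -> F A -> F B.

Definition IsFunctor (F : Type -> Type) (fmap : fmap_t F) : Prop :=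
  (forall A (x : F A), fmap A A (fun a => a) x = x) /\
  (forall A B C (f : A -> B) (g : B -> C) (x : F A),
      fmap A C (fun a => g (f a)) x = fmap B C g (fmap A B f x)).

Definition IsDirectedPreorder (I : Type) (le : I -> I -> Prop) : Prop :=
  (forall i, le i i) /\ (forall i j k, le i j -> le j k -> le i k) /\
  inhabited I /\ (forall i j, exists k, le i k /\ le j k).

Definition IsDiagram (I : Type) (le : I -> I -> Prop) (X : I -> Type)
  (f : forall i j, le i j -> X i -> X j) : Prop :=
  (forall i (h : le i i) x, f i i h x = x) /\
  (forall i j k (hij : le i j) (hjk : le j k) (hik : le i k) x,
      f i k hik x = f j k hjk (f i j hij x)).

Definition IsColimit (I : Type) (le : I -> I -> Prop) (X : I -> Type)
  (f : forall i j, le i j -> X i -> X j) (C : Type) (c : forall i, X i -> C) : Prop :=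
  (forall i j (h : le i j) x, c j (f i j h x) = c i x) /\
  (forall (D : Type) (d : forall i, X i -> D),
      (forall i j (h : le i j) x, d j (f i j h x) = d i x) ->
      exists u : C -> D, (forall i x, u (c i x) = d i x) /\
        (forall u' : C -> D, (forall i x, u' (c i x) = d i x) -> forall y, u' y = u y)).

(** finitary = preserves filtered (equivalently: directed) colimits *)
Definition Finitary (F : Type -> Type) (fmap : fmap_t F) : Prop :=
  forall (I : Type) (le : I -> I -> Prop) (X : I -> Type)
         (f : forall i j, le i j -> X i -> X j) (C : Type) (c : forall i, X i -> C),
    @IsDirectedPreorder I le -> @IsDiagram I le X f -> @IsColimit I le X f C c ->
    @IsColimit I le (fun i => F (X i)) (fun i j h => fmap _ _ (f i j h))
              (F C) (fun i => fmap _ _ (c i)).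

Definition IsChainLimit (X : nat -> Type) (f : forall n, X n.+1 -> X n)
  (L : Type) (l : forall n, L -> X n) : Prop :=
  (forall n x, f n (l n.+1 x) = l n x) /\
  (forall (D : Type) (d : forall n, D -> X n),
      (forall n x, f n (d n.+1 x) = d n x) ->
      exists u : D -> L, (forall n x, l n (u x) = d n x) /\
        (forall u' : D -> L, (forall n x, l n (u' x) = d n x) -> forall y, u' y = u y)).

Definition PreservesChainLimits (F : Type -> Type) (fmap : fmap_t F) : Prop :=
  forall (X : nat -> Type) (f : forall n, X n.+1 -> X n) (L : Type) (l : forall n, L -> X n),
    @IsChainLimit X f L l ->
    @IsChainLimit (fun n => F (X n)) (fun n => fmap _ _ (f n)) (F L) (fun n => fmap _ _ (l n)).

Definition Bicontinuous (F : Type -> Type) (fmap : fmap_t F) : Prop :=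
  Finitary fmap /\ PreservesChainLimits fmap.

Definition IsInitialAlgebra (F : Type -> Type) (fmap : fmap_t F) (A : Type) (a : F A -> A) : Prop :=
  forall (B : Type) (b : F B -> B),
    exists h : A -> B, (forall x, h (a x) = b (fmap _ _ h x)) /\
      (forall h' : A -> B, (forall x, h' (a x) = b (fmap _ _ h' x)) -> forall y, h' y = h y).

Definition IsTerminalCoalgebra (F : Type -> Type) (fmap : fmap_t F) (A : Type) (a : A -> F A) : Prop :=
  forall (B : Type) (b : B -> F B),
    exists h : B -> A, (forall x, a (h x) = fmap _ _ h (b x)) /\
      (forall h' : B -> A, (forall x, a (h' x) = fmap _ _ h' (b x)) -> forall y, h' y = h y).

Definition HSig (Sig : nat -> Type) (X : Type) : Type :=
  {n : nat & (Sig n * ('I_n -> X))%type}.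

Definition HSig_map (Sig : nat -> Type) (X Y : Type) (g : X -> Y) (u : HSig Sig X) : HSig Sig Y :=
  let: existT n (s, xs) := u in existT _ n (s, fun i => g (xs i)).

Definition IsPresentation (Sig : nat -> Type) (F : Type -> Type) (fmap : fmap_t F)
  (eps : forall X, HSig Sig X -> F X) : Prop :=
  (forall X Y (g : X -> Y) (u : HSig Sig X), eps Y (HSig_map g u) = fmap X Y g (eps X u)) /\
  (forall X (y : F X), exists u, eps X u = y).

(** finite Sigma-trees: mu H_Sigma *)
Inductive ftree (Sig : nat -> Type) : Type :=
  fnode : forall n, Sig n -> ('I_n -> ftree Sig) -> ftree Sig.

(** all Sigma-trees: nu H_Sigma (up to bisimilarity) *)
CoInductive ctree (Sig : nat -> Type) : Type :=
  cnode : forall n, Sig n -> ('I_n -> ctree Sig) -> ctree Sig.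

Definition ctree_out (Sig : nat -> Type) (t : ctree Sig) : HSig Sig (ctree Sig) :=
  match t with cnode n s ts => existT _ n (s, ts) end.

Fixpoint femb (Sig : nat -> Type) (t : ftree Sig) : ctree Sig :=
  match t with fnode n s ts => cnode s (fun i => femb (ts i)) end.

Lemma ord0_False (i : 'I_0) : False.
Proof. by case: i. Qed.

Definition ord0_elim (A : Type) (i : 'I_0) : A := False_rect A (ord0_False i).

Fixpoint cut (Sig : nat -> Type) (p' : Sig 0) (k : nat) (t : ctree Sig) : ftree Sig :=
  match k with
  | 0 => fnode p' (@ord0_elim (ftree Sig))
  | k'.+1 => match t with cnode n s ts => fnode s (fun i => cut p' k' (ts i)) end
  end.

(** h : mu H_Sigma -> mu F, the unique Sigma-algebra homomorphism into
    (mu F, phi . eps_{mu F}) (by structural recursion) *)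
Fixpoint hmu (Sig : nat -> Type) (F : Type -> Type) (mu : Type) (phi : F mu -> mu)
  (eps : forall X, HSig Sig X -> F X) (t : ftree Sig) : mu :=
  match t with
  | fnode n s ts => phi (eps mu (existT _ n (s, fun i => hmu phi eps (ts i))))
  end.

Definition csim (Sig : nat -> Type) (F : Type -> Type) (mu : Type) (phi : F mu -> mu)
  (eps : forall X, HSig Sig X -> F X) (p' : Sig 0) (s s' : ctree Sig) : Prop :=
  forall n, hmu phi eps (cut p' n s) = hmu phi eps (cut p' n s').

Definition cut_le (Sig : nat -> Type) (F : Type -> Type) (mu : Type) (phi : F mu -> mu)
  (eps : forall X, HSig Sig X -> F X) (p' : Sig 0) (nu : Type) (khat : ctree Sig -> nu)
  (x y : nu) : Prop :=
  x = y \/ exists (s s' : ctree Sig) (n : nat),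
      x = khat s /\ y = khat s' /\ csim phi eps p' s (femb (cut p' n s')).

Definition IsPoset (P : Type) (le : P -> P -> Prop) : Prop :=
  (forall x, le x x) /\ (forall x y z, le x y -> le y z -> le x z) /\
  (forall x y, le x y -> le y x -> x = y).

Definition Directed (P : Type) (le : P -> P -> Prop) (D : P -> Prop) : Prop :=
  (exists x, D x) /\ (forall x y, D x -> D y -> exists z, D z /\ le x z /\ le y z).

Definition IsJoin (P : Type) (le : P -> P -> Prop) (D : P -> Prop) (x : P) : Prop :=
  (forall d, D d -> le d x) /\ (forall u, (forall d, D d -> le d u) -> le x u).

Definition IsCpo (P : Type) (le : P -> P -> Prop) : Prop :=
  IsPoset le /\ (forall D, Directed le D -> exists x, IsJoin le D x).

Definition image (P Q : Type) (f : P -> Q) (D : P -> Prop) : Q -> Prop :=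
  fun y => exists d, D d /\ y = f d.

Definition Monotone (P Q : Type) (leP : P -> P -> Prop) (leQ : Q -> Q -> Prop) (f : P -> Q) : Prop :=
  forall x y, leP x y -> leQ (f x) (f y).

Definition Continuous (P Q : Type) (leP : P -> P -> Prop) (leQ : Q -> Q -> Prop) (f : P -> Q) : Prop :=
  Monotone leP leQ f /\
  (forall D x, Directed leP D -> IsJoin leP D x -> IsJoin leQ (image f D) (f x)).

Definition ConservativeCompletion (P Q : Type) (leP : P -> P -> Prop) (leQ : Q -> Q -> Prop)
  (e : P -> Q) : Prop :=
  IsCpo leQ /\
  IsPoset leP /\ (forall x y, e x = e y -> x = y) /\ (forall x y, leP x y <-> leQ (e x) (e y)) /\
  (forall D x, Directed leP D -> IsJoin leP D x -> IsJoin leQ (image e D) (e x)) /\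
  (forall (R : Type) (leR : R -> R -> Prop), IsCpo leR ->
     forall f : P -> R, Continuous leP leR f ->
       exists g : Q -> R, Continuous leQ leR g /\ (forall x, g (e x) = f x) /\
         (forall g' : Q -> R, Continuous leQ leR g' -> (forall x, g' (e x) = f x) ->
            forall y, g' y = g y)).

(* Main.v *)
From Stdlib Require Import PropExtensionality FunctionalExtensionality ProofIrrelevance IndefiniteDescription Classical.
From mathcomp Require Import all_boot.
From mathcomp Require Import zify.
Require Import Defs.
Set Implicit Arguments.
Unset Strict Implicit.

Section Order.
Variables (mu nu : Type) (m : mu -> nu) (dd : nat -> nu -> mu).
Hypothesis A0 : forall y y', dd 0 y = dd 0 y'.
Hypothesis A1 : forall j n y, dd j (m (dd n y)) = dd (minn j n) y.
Hypothesis A2 : forall y y', (forall n, dd n y = dd n y') -> y = y'.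
Hypothesis A3 : forall a : nat -> mu, (forall n, a n = dd n (m (a n.+1))) ->
  exists z, forall n, dd n z = a n.
Hypothesis A4 : forall a, exists N, dd N (m a) = a.

Definition cc n y := m (dd n y).
Definition lo x y := x = y \/ exists n, x = cc n y.

Lemma ccc k n y : cc k (cc n y) = cc (minn k n) y.
Proof. apply: A2 => j. by rewrite /cc !A1 minnA. Qed.

Lemma ccl k n y : k <= n -> cc k (cc n y) = cc k y.
Proof. by move=> h; rewrite ccc (minn_idPl h). Qed.
Lemma ccr k n y : n <= k -> cc k (cc n y) = cc n y.
Proof. by move=> h; rewrite ccc (minn_idPr h). Qed.

Lemma lo_refl x : lo x x. Proof. by left. Qed.
Lemma lo_trans x y z : lo x y -> lo y z -> lo x z.
Proof.
case=> [->|[a ->]] //; case=> [->|[b ->]].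
- by right; exists a.
- by right; exists (minn a b); rewrite ccc.
Qed.
Lemma lo_antisym x y : lo x y -> lo y x -> x = y.
Proof.
case=> [//|[a ->]]; case=> [//|[b Hy]].
set w := cc a y in Hy *.
have Hx : w = cc (minn a b) w by rewrite /w {1}Hy ccc.
rewrite Hy {2}Hx ccc.
have -> : minn b (minn a b) = minn a b by lia.
exact: Hx.
Qed.
Lemma lo_cc n y : lo (cc n y) y. Proof. by right; exists n. Qed.
Lemma lo_mono n k y : n <= k -> lo (cc n y) (cc k y).
Proof. by move=> h; right; exists n; rewrite ccl. Qed.

Lemma lo_poset : IsPoset lo.
Proof. split; [exact lo_refl|split; [exact lo_trans|exact lo_antisym]]. Qed.

Lemma comparable x y z : lo x z -> lo y z -> lo x y \/ lo y x.
Proof.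
case=> [->|[a ->]]; first by right.
case=> [->|[b ->]]; first by left; exact: lo_cc.
case: (leqP a b) => h.
- by left; right; exists a; rewrite ccl.
- by right; right; exists b; rewrite ccl // ltnW.
Qed.

Lemma Jlemma (D : nu -> Prop) : Directed lo D ->
  (exists d, D d /\ forall y, D y -> lo y d) \/
  (exists z, (forall d, D d -> lo d z) /\ (forall u, (forall d, D d -> lo d u) -> u = z) /\
     (forall n, exists d, D d /\ dd n d = dd n z)).
Proof.
move=> [[x0 Dx0] HD].
case: (classic (exists d, D d /\ forall y, D y -> lo y d)) => [h|nomax]; [by left|right].
have strict : forall x, D x -> exists y, D y /\ lo x y /\ x <> y.
  move=> x Dx; apply: NNPP => hn; apply: nomax; exists x; split=> // y Dy.
  have [z [Dz [hxz hyz]]] := HD x y Dx Dy.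
  case: (classic (x = z)) => [->//|ne]; by case: hn; exists z.
have chain : forall x y, D x -> D y -> lo x y \/ lo y x.
  move=> x y Dx Dy; have [z [_ [h1 h2]]] := HD x y Dx Dy; exact: comparable h1 h2.
have key : forall n d d', lo d d' -> cc n d <> d -> dd n d = dd n d'.
  move=> n d d' [->//|[b Hd]] hn; case: (leqP b n) => hb.
  - by exfalso; apply: hn; rewrite Hd ccr.
  - by rewrite Hd /cc A1 (minn_idPl (ltnW hb)).
have wd : forall n d d', D d -> D d' -> cc n d <> d -> cc n d' <> d' -> dd n d = dd n d'.
  move=> n d d' Dd Dd' h1 h2; case: (chain d d' Dd Dd') => h; [exact: key | symmetry; exact: key].
have exN : forall n, exists d, D d /\ cc n d <> d.
  elim=> [|n [d [Dd hn]]].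
  - have [y [Dy [hxy ne]]] := strict x0 Dx0.
    case: (classic (cc 0 x0 = x0)) => h0; last by exists x0.
    exists y; split=> // h1; apply: ne.
    by rewrite -h0 -h1 /cc (A0 x0 y).
  - have [d' [Dd' [hdd' ne]]] := strict d Dd; exists d'; split=> // h1.
    case: hdd' => [//|[b Hd]].
    case: (leqP b n) => hb; first by apply: hn; rewrite Hd ccr.
    by apply: ne; rewrite Hd -{1}h1 ccr.
pose sel n := proj1_sig (constructive_indefinite_description _ (exN n)).
have selP : forall n, D (sel n) /\ cc n (sel n) <> sel n.
  move=> n; exact: (proj2_sig (constructive_indefinite_description _ (exN n))).
pose a n := dd n (sel n).
have compat : forall n, a n = dd n (m (a n.+1)).
  move=> n; have [D1 h1] := selP n.+1.
  have h0 : cc n (sel n.+1) <> sel n.+1.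
    by move=> e; apply: h1; rewrite -e ccr.
  rewrite /a A1 (minn_idPl (leqnSn n)).
  have [D0 h0'] := selP n; exact: wd.
have [z Hz] := @A3 a compat.
exists z; split; [|split].
- move=> d Dd; have [d' [Dd' [hdd' ne]]] := strict d Dd.
  case: hdd' => [//|[b Hd]]; right; exists b.
  apply: A2 => j; rewrite Hd /cc !A1 Hz /a.
  have [Dk hk] := selP (minn j b).
  apply: wd => // e; apply: ne; rewrite Hd -{1}e ccr //; exact: geq_minr.
- move=> u hu; apply: A2 => n; rewrite Hz.
  have [De hn] := selP n.
  case: (hu _ De) => [e|[b He]].
  + by exfalso; apply: nomax; exists u; split; [rewrite -e | exact: hu].
  + case: (leqP b n) => hb; first by exfalso; apply: hn; rewrite He ccr.
    by rewrite /a He /cc A1 (minn_idPl (ltnW hb)).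
- move=> n; exists (sel n); split; [exact: (selP n).1 | by rewrite Hz].
Qed.

Lemma lo_cpo : IsCpo lo.
Proof.
split; first exact: lo_poset.
move=> D hD; case: (Jlemma hD) => [[d [Dd hd]]|[z [ub [uq _]]]].
- by exists d; split=> // u hu; exact: hu.
- exists z; split=> // u hu; rewrite (uq u hu); exact: lo_refl.
Qed.

Definition Cset y := fun w => exists n, w = cc n y.

Lemma density y : Directed lo (Cset y) /\ IsJoin lo (Cset y) y.
Proof.
have hD : Directed lo (Cset y).
  split; first by exists (cc 0 y), 0.
  move=> _ _ [n ->] [k ->]; exists (cc (maxn n k) y); split; first by exists (maxn n k).
  split; apply: lo_mono; [exact: leq_maxl | exact: leq_maxr].
split=> //; split; first by move=> _ [n ->]; exact: lo_cc.
move=> u hu; case: (Jlemma hD) => [[d [[N ->] hmax]]|[z [ub [uq _]]]].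
- have hfin : cc N y = y.
    apply: A2 => j; rewrite /cc A1; case: (leqP j N) => h; first by [].
    have E := lo_antisym (hmax _ (ex_intro _ j erefl)) (lo_mono y (ltnW h)).
    by have := congr1 (dd j) E; rewrite /cc !A1 minnn (minn_idPr (ltnW h)) => ->.
  rewrite -hfin; apply: hu; by exists N.
- have e1 := uq u hu.
  have e2 : y = z by apply: uq => _ [n ->]; exact: lo_cc.
  rewrite e1 -e2; exact: lo_refl.
Qed.

Lemma join_eq (Q : Type) (leQ : Q -> Q -> Prop)
  (Has : forall a b, leQ a b -> leQ b a -> a = b) (P P' : Q -> Prop) a b :
  (forall r, P r -> P' r) -> (forall r, P' r -> P r) -> IsJoin leQ P a -> IsJoin leQ P' b -> a = b.
Proof.
move=> h1 h2 [Ja1 Ja2] [Jb1 Jb2]; apply: Has.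
- apply: Ja2 => r Pr; exact: Jb1 (h1 _ Pr).
- apply: Jb2 => r Pr; exact: Ja1 (h2 _ Pr).
Qed.

Lemma ext_uniq (Q : Type) (leQ : Q -> Q -> Prop)
  (Has : forall a b, leQ a b -> leQ b a -> a = b) (g1 g2 : nu -> Q) :
  Continuous lo leQ g1 -> Continuous lo leQ g2 -> (forall a, g1 (m a) = g2 (m a)) ->
  forall y, g1 y = g2 y.
Proof.
move=> [_ c1] [_ c2] h y; have [Dir Jn] := density y.
apply: (join_eq Has _ _ (c1 _ _ Dir Jn) (c2 _ _ Dir Jn)).
- move=> _ [d [[n ->] ->]]; exists (cc n y); split; [by exists n | exact: h].
- move=> _ [d [[n ->] ->]]; exists (cc n y); split; [by exists n | by rewrite h].
Qed.

Lemma stab a N K : dd N (m a) = a -> N <= K -> dd K (m a) = a.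
Proof. by move=> h hNK; rewrite -{1}h A1 (minn_idPr hNK) h. Qed.

Lemma m_inj x y : m x = m y -> x = y.
Proof.
move=> e; have [N hN] := A4 x; have [M hM] := A4 y.
rewrite -(stab hN (leq_maxl N M)) -(stab hM (leq_maxr N M)) e //.
Qed.

Lemma CCompl : ConservativeCompletion (fun x y => lo (m x) (m y)) lo m.
Proof.
split; first exact: lo_cpo.
split.
  split; first by move=> x; exact: lo_refl.
  split; first by move=> x y z; exact: lo_trans.
  by move=> x y h1 h2; apply: m_inj; exact: lo_antisym.
split; first exact: m_inj.
split; first by [].
split.
  move=> D x [[d0 Dd0] hDd] [hx1 hx2].
  have hD : Directed lo (image m D).
    split; first by exists (m d0), d0.
    move=> _ _ [d1 [D1 ->]] [d2 [D2 ->]]; have [d3 [D3 [h1 h2]]] := hDd d1 d2 D1 D2.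
    by exists (m d3); split; [exists d3|].
  case: (Jlemma hD) => [[w [[d0' [D0 ->]] hmax]]|[z [ub [uq _]]]].
  - split; first by move=> _ [d [Dd ->]]; exact: hx1.
    move=> u hu; apply: (lo_trans _ (hu _ (ex_intro _ d0' (conj D0 erefl)))).
    apply: hx2 => d Dd; apply: hmax; by exists d.
  - have e : m x = z by apply: uq => _ [d [Dd ->]]; exact: hx1.
    split; first by rewrite e.
    move=> u hu; rewrite (uq u hu) -e; exact: lo_refl.
move=> R leR [[Rref [Rtr Ras]] Rcpo] f [fmono fjoin].
pose Sy y := fun r => exists n, r = f (dd n y).
have dirS : forall y, Directed leR (Sy y).
  move=> y; split; first by exists (f (dd 0 y)), 0.
  move=> _ _ [n ->] [k ->]; exists (f (dd (maxn n k) y)); split; first by exists (maxn n k).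
  split; apply: fmono; apply: lo_mono; [exact: leq_maxl | exact: leq_maxr].
pose g y := proj1_sig (constructive_indefinite_description _ (Rcpo _ (dirS y))).
have gJ : forall y, IsJoin leR (Sy y) (g y).
  move=> y; exact: (proj2_sig (constructive_indefinite_description _ (Rcpo _ (dirS y)))).
have gm : forall a, g (m a) = f a.
  move=> a; apply: (join_eq Ras (fun r (h : Sy (m a) r) => h) (fun r h => h) (gJ (m a))).
  split; first by move=> _ [n ->]; apply: fmono; exact: lo_cc.
  move=> u hu; have [N hN] := A4 a; apply: hu; exists N; by rewrite hN.
have gmono : Monotone lo leR g.
  move=> x y [->|[n ->]]; first exact: Rref.
  rewrite /cc gm; apply: (gJ y).1; by exists n.
have gcont : Continuous lo leR g.
  split=> // D x hD hJ; split; first by move=> _ [d [Dd ->]]; apply: gmono; exact: hJ.1.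
  move=> u hu; case: (Jlemma hD) => [[d0 [D0 hmax]]|[z [ub [uq hz]]]].
  - have e : x = d0 by apply: lo_antisym; [exact: hJ.2 | exact: hJ.1].
    rewrite e; apply: hu; by exists d0.
  - have e : x = z := uq x hJ.1.
    apply: (gJ x).2 => _ [n ->]; have [d [Dd hd]] := hz n.
    rewrite e -hd; apply: (Rtr _ (g d)); [apply: (gJ d).1; by exists n | apply: hu; by exists d].
exists g; split=> //; split=> // g' hg' hg'm y.
apply: (ext_uniq Ras hg' gcont) => a; by rewrite hg'm gm.
Qed.

End Order.

Lemma sig_ext (A : Type) (P : A -> Prop) (x y : {a | P a}) : sval x = sval y -> x = y.
Proof. case: x => a ha; case: y => b hb /= e; subst b; f_equal; apply: proof_irrelevance. Qed.

Unset Implicit Arguments.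
Section Concrete.
Variables (F : Type -> Type) (fmap : fmap_t F) (HF : IsFunctor fmap)
 (Hpres : PreservesChainLimits fmap)
 (mu : Type) (phi : F mu -> mu) (Hmu : IsInitialAlgebra fmap phi) (phiinv : mu -> F mu)
 (Hphi1 : forall x, phi (phiinv x) = x) (Hphi2 : forall u, phiinv (phi u) = u)
 (nu : Type) (tau : nu -> F nu) (Hnu : IsTerminalCoalgebra fmap tau)
 (tauinv : F nu -> nu)
 (Htau1 : forall x, tauinv (tau x) = x) (Htau2 : forall u, tau (tauinv u) = u)
 (m : mu -> nu) (Hm : forall x, tau (m x) = fmap _ _ m (phiinv x))
 (Sig : nat -> Type) (eps : forall X, HSig Sig X -> F X) (Heps : IsPresentation fmap eps)
 (p' : Sig 0) (khat : ctree Sig -> nu)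
 (Hk : forall t, tau (khat t) = fmap _ _ khat (eps _ (ctree_out t))).

Lemma fcomp A B C (f : A -> B) (g : B -> C) x :
  fmap _ _ (fun a => g (f a)) x = fmap _ _ g (fmap _ _ f x).
Proof. exact: HF.2. Qed.
Lemma fid A (x : F A) : fmap _ _ (fun a => a) x = x.
Proof. exact: HF.1. Qed.
Lemma natE X Y (g : X -> Y) u : eps Y (HSig_map g u) = fmap _ _ g (eps X u).
Proof. exact: Heps.1. Qed.

Definition c0 := phi (eps mu (existT _ 0 (p', @ord0_elim mu))).
Fixpoint dd (n : nat) (y : nu) : mu :=
  match n with 0 => c0 | k.+1 => phi (fmap _ _ (dd k) (tau y)) end.

Lemma e0lemma X Y (g : X -> Y) :
  fmap _ _ g (eps X (existT _ 0 (p', @ord0_elim X))) = eps Y (existT _ 0 (p', @ord0_elim Y)).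
Proof.
rewrite -natE /HSig_map.
have -> : (fun i : 'I_0 => g (ord0_elim X i)) = ord0_elim Y.
  by apply: functional_extensionality => i; case: (ord0_False i).
by [].
Qed.

Lemma ddm n a : dd n.+1 (m a) = phi (fmap _ _ (fun b => dd n (m b)) (phiinv a)).
Proof. by rewrite /= Hm -fcomp. Qed.

Lemma A1c j n y : dd j (m (dd n y)) = dd (minn j n) y.
Proof.
elim: j n y => [|k IH] n y; first by rewrite min0n.
case: n => [|n].
- by rewrite minn0 ddm /= /c0 Hphi2 e0lemma.
- rewrite minnSS ddm /= Hphi2 -fcomp.
  have -> : (fun a => dd k (m (dd n a))) = dd (minn k n).
    by apply: functional_extensionality => a; exact: IH.
  by [].
Qed.

Definition Spred (a : nat -> mu) : Prop := forall n, a n = dd n (m (a n.+1)).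
Definition Sseq := {a : nat -> mu | Spred a}.

Lemma SL : @IsChainLimit (fun _ => mu) (fun n a => dd n (m a)) Sseq (fun n s => sval s n).
Proof.
split; first by move=> n [a h] /=; rewrite -h.
move=> D d hd.
exists (fun x => exist Spred (fun n => d n x) (fun n => esym (hd n x))); split=> // u' hu' y.
apply: sig_ext => /=; apply: functional_extensionality => n; exact: hu'.
Qed.

Lemma inj_lim : (forall y y', (forall n, dd n y = dd n y') -> y = y') /\
  (forall a, (forall n, a n = dd n (m (a n.+1))) -> exists z, forall n, dd n z = a n).
Proof.
have FSL := Hpres _ _ _ _ SL.
have [_ FU] := FSL.
have cmp1 : forall n (x : Sseq), fmap _ _ (fun a => dd n (m a)) (phiinv (sval x n.+2))
    = phiinv (sval x n.+1).
  by move=> n [a ha]; rewrite /= (ha n.+1) ddm Hphi2.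
have [sig [Hsig _]] := FU Sseq (fun n s => phiinv (sval s n.+1)) cmp1.
have [g [Hg _]] := Hnu Sseq sig.
have gdd : forall n s, dd n (g s) = sval s n.
  elim=> [|n IH] s /=.
  - by case: s => a ha /=; rewrite (ha 0).
  - rewrite Hg -fcomp.
    have -> : (fun a => dd n (g a)) = (fun s => sval s n).
      by apply: functional_extensionality => s'; exact: IH.
    by rewrite Hsig Hphi1.
split; last first.
  move=> a ha; exists (g (exist Spred a ha)) => n; exact: gdd.
have dP : forall y n, dd n y = dd n (m (dd n.+1 y)).
  by move=> y n; rewrite A1c (minn_idPl (leqnSn n)).
pose del y : Sseq := exist Spred (fun n => dd n y) (dP y).
have cmp2 : forall n x, fmap _ _ (fun a => dd n (m a)) (fmap _ _ (dd n.+1) (tau x))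
    = fmap _ _ (dd n) (tau x).
  move=> n x; rewrite -fcomp; congr (fmap _ _ _ _); apply: functional_extensionality => b.
  by rewrite A1c (minn_idPl (leqnSn n)).
have [u [_ uq]] := FU nu (fun n y => fmap _ _ (dd n) (tau y)) cmp2.
have sd : forall y, sig (del y) = fmap _ _ del (tau y).
  have h1 : forall n x, fmap _ _ (fun s => sval s n) (sig (del x)) = fmap _ _ (dd n) (tau x).
    by move=> n x; rewrite Hsig /= Hphi2.
  have h2 : forall n x, fmap _ _ (fun s => sval s n) (fmap _ _ del (tau x)) = fmap _ _ (dd n) (tau x).
    by move=> n x; rewrite -fcomp.
  move=> y; have e1 := uq (fun y => sig (del y)) h1 y.
  have e2 := uq (fun y => fmap _ _ del (tau y)) h2 y.
  exact: (etrans e1 (esym e2)).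
have gd : forall y, g (del y) = y.
  have [h [_ uqh]] := Hnu nu tau.
  have h1 : forall x, tau (g (del x)) = fmap _ _ (fun y => g (del y)) (tau x).
    by move=> x; rewrite Hg sd -fcomp.
  have h2 : forall x, tau x = fmap _ _ (fun y => y) (tau x).
    by move=> x; rewrite fid.
  move=> y; exact: (etrans (uqh _ h1 y) (esym (uqh _ h2 y))).
move=> y y' h; rewrite -(gd y) -(gd y'); congr g; apply: sig_ext => /=.
by apply: functional_extensionality => n; exact: h.
Qed.

Lemma mu_ind (P : mu -> Prop) :
  (forall u : F {a | P a}, P (phi (fmap _ _ (fun s => sval s) u))) -> forall a, P a.
Proof.
move=> H.
pose b (v : F {a | P a}) : {a | P a} := exist _ _ (H v).
have [h [Hh _]] := Hmu _ b.
have [h0 [_ uq]] := Hmu _ phi.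
have e1 : forall a, sval (h a) = h0 a.
  by apply: (uq (fun a => sval (h a))) => x; rewrite Hh /= -fcomp.
have e2 : forall a, a = h0 a.
  by apply: (uq (fun a => a)) => x; rewrite fid.
move=> a; rewrite (e2 a) -e1; exact: (proj2_sig (h a)).
Qed.

Lemma A4c a : exists N, dd N (m a) = a.
Proof.
move: a; apply: mu_ind => u.
have [[k [s ys]] hu] := Heps.2 _ u.
rewrite -hu -natE /=.
pose N i := proj1_sig (constructive_indefinite_description _ (proj2_sig (ys i))).
have hN : forall i, dd (N i) (m (sval (ys i))) = sval (ys i).
  move=> i; exact: (proj2_sig (constructive_indefinite_description _ (proj2_sig (ys i)))).
exists (\max_(i < k) N i).+1.
rewrite ddm Hphi2 -natE /=.
have -> : (fun i => dd (\max_(i0 < k) N i0) (m (sval (ys i)))) = (fun i => sval (ys i)).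
  apply: functional_extensionality => i.
  by rewrite -{1}(hN i) A1c (minn_idPr (leq_bigmax i)) hN.
by [].
Qed.

Lemma T1 n t : dd n (khat t) = hmu phi eps (cut p' n t).
Proof.
elim: n t => [|n IH] t.
- rewrite /= /c0.
  have -> : (fun i : 'I_0 => hmu phi eps (ord0_elim (ftree Sig) i)) = ord0_elim mu.
    by apply: functional_extensionality => i; case: (ord0_False i).
  by [].
- case: t => k s ts; rewrite /= Hk /= -fcomp -natE /HSig_map.
  have -> : (fun i => dd n (khat (ts i))) = (fun i => hmu phi eps (cut p' n (ts i))).
    by apply: functional_extensionality => i; exact: IH.
  by [].
Qed.

Definition fout (t : ftree Sig) : HSig Sig (ftree Sig) :=
  match t with fnode n s ts => existT _ n (s, ts) end.

Lemma T2 t : khat (femb t) = m (hmu phi eps t).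
Proof.
have [h [_ uq]] := Hnu (ftree Sig) (fun t => eps _ (fout t)).
have h1 : forall x, tau (m (hmu phi eps x)) = fmap _ _ (fun t => m (hmu phi eps t)) (eps _ (fout x)).
  by case=> k s ts; rewrite Hm /= Hphi2 (fcomp _ _ _ (hmu phi eps) m) -(natE _ _ (hmu phi eps)).
have h2 : forall x, tau (khat (femb x)) = fmap _ _ (fun t => khat (femb t)) (eps _ (fout x)).
  by case=> k s ts; rewrite Hk /= (fcomp _ _ _ (@femb Sig) khat) -(natE _ _ (@femb Sig)).
exact: (etrans (uq _ h2 t) (esym (uq _ h1 t))).
Qed.

Definition pick (u : F nu) : HSig Sig nu :=
  proj1_sig (constructive_indefinite_description _ (Heps.2 nu u)).

CoFixpoint sec (y : nu) : ctree Sig :=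
  match pick (tau y) with existT n (s, xs) => cnode s (fun i => sec (xs i)) end.

Lemma sec_out y : ctree_out (sec y) = HSig_map sec (pick (tau y)).
Proof. by rewrite /=; case: (pick (tau y)) => k [s xs]. Qed.

Lemma khat_sec y : khat (sec y) = y.
Proof.
have [h [_ uq]] := Hnu nu tau.
have h2 : forall x, tau x = fmap _ _ (fun y => y) (tau x).
  by move=> x; rewrite fid.
have h1 : forall x, tau (khat (sec x)) = fmap _ _ (fun y => khat (sec y)) (tau x).
  move=> x; rewrite Hk sec_out natE (fcomp _ _ _ sec khat).
  by rewrite /pick (proj2_sig (constructive_indefinite_description _ (Heps.2 nu (tau x)))).
exact: (etrans (uq _ h1 y) (esym (uq _ h2 y))).
Qed.

Lemma le_iff x y : cut_le phi eps p' khat x y <-> lo m dd x y.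
Proof.
split.
- case=> [->|[s [s' [n [-> [-> h]]]]]]; first by left.
  right; exists n; rewrite /cc (T1 n s') -T2.
  apply: (inj_lim.1) => k; rewrite !T1; exact: h k.
- case=> [->|[n ->]]; first by left.
  right; exists (femb (cut p' n (sec y))), (sec y), n.
  split; first by rewrite /cc T2 -T1 khat_sec.
  split; first by rewrite khat_sec.
  by move=> k.
Qed.

Lemma final :
  ConservativeCompletion (fun x y => cut_le phi eps p' khat (m x) (m y)) (cut_le phi eps p' khat) m /\
  (Continuous (cut_le phi eps p' khat)
     (fun u v => cut_le phi eps p' khat (tauinv u) (tauinv v)) tau /\
   (forall x, tau (m x) = fmap _ _ m (phiinv x)) /\
   (forall g : nu -> F nu, Continuous (cut_le phi eps p' khat)
        (fun u v => cut_le phi eps p' khat (tauinv u) (tauinv v)) g ->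
      (forall x, g (m x) = fmap _ _ m (phiinv x)) -> forall y, g y = tau y)).
Proof.
have E : cut_le phi eps p' khat = lo m dd.
  apply: functional_extensionality => x; apply: functional_extensionality => y.
  apply: propositional_extensionality; exact: le_iff.
rewrite E.
have A0 : forall y y', dd 0 y = dd 0 y' by [].
have [A2 A3] := inj_lim.
split; first exact: (CCompl A0 A1c A2 A3 A4c).
have tc : Continuous (lo m dd) (fun u v => lo m dd (tauinv u) (tauinv v)) tau.
  split; first by move=> x y h; rewrite !Htau1.
  move=> D x hD [j1 j2]; split.
  - by move=> _ [d [Dd ->]]; rewrite !Htau1; exact: j1.
  - move=> u hu; rewrite Htau1; apply: j2 => d Dd.
    have := hu (tau d) (ex_intro _ d (conj Dd erefl)); by rewrite Htau1.
split=> //; split=> // g hg hgm y.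
apply: (ext_uniq A0 A1c A2 A3 _ hg tc).
- move=> u v h1 h2; rewrite -(Htau2 u) -(Htau2 v); congr tau; exact: (lo_antisym A1c A2).
- by move=> a; rewrite hgm Hm.
Qed.

End Concrete.

Theorem corollary4p16
  (F : Type -> Type) (fmap : fmap_t F)
  (HF : IsFunctor fmap) (Hbic : Bicontinuous fmap)
  (Hne : inhabited (F Empty_set))
  (mu : Type) (phi : F mu -> mu) (Hmu : IsInitialAlgebra fmap phi)
  (phiinv : mu -> F mu)
  (Hphi1 : forall x, phi (phiinv x) = x) (Hphi2 : forall u, phiinv (phi u) = u)
  (nu : Type) (tau : nu -> F nu) (Hnu : IsTerminalCoalgebra fmap tau)
  (tauinv : F nu -> nu)
  (Htau1 : forall x, tauinv (tau x) = x) (Htau2 : forall u, tau (tauinv u) = u)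
  (m : mu -> nu) (Hm : forall x, tau (m x) = fmap _ _ m (phiinv x))
  (Sig : nat -> Type) (eps : forall X, HSig Sig X -> F X)
  (Heps : IsPresentation fmap eps)
  (p' : Sig 0)
  (khat : ctree Sig -> nu)
  (Hk : forall t, tau (khat t) = fmap _ _ khat (eps _ (ctree_out t))) :
  let le_nu := cut_le phi eps p' khat in
  let le_mu := fun x y => le_nu (m x) (m y) in
  let le_Fnu := fun u v => le_nu (tauinv u) (tauinv v) in
  ConservativeCompletion le_mu le_nu m /\
  (Continuous le_nu le_Fnu tau /\
   (forall x, tau (m x) = fmap _ _ m (phiinv x)) /\
   (forall g : nu -> F nu, Continuous le_nu le_Fnu g ->
      (forall x, g (m x) = fmap _ _ m (phiinv x)) -> forall y, g y = tau y)).
Proof.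
exact: (final F fmap HF (proj2 Hbic) mu phi Hmu phiinv Hphi1 Hphi2 nu tau Hnu tauinv
  Htau1 Htau2 m Hm Sig eps Heps p' khat Hk).
Qed.
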